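(* Let $R$ be a set of queueing requests issued on a tree $T$ and let $r_i=(v_i,t_i)$, $r_j=(v_j,t_j)$ be two requests of $R$ that are consecutive with respect to time of occurrence ($t_i\le t_j$). Choose requests $r_a=(v_a,t_a)$ with $t_a\le t_i$ and $r_b=(v_b,t_b)$ with $t_b\ge t_j$ minimizing $\delta:=t_b-t_a-d_T(v_a,v_b)$. If $\delta>0$, then replacing every request $r=(v,t)$ with $t\ge t_j$ by the request $r'=(v,t-\delta)$ does not decrease the worst-case (over asynchronous executions) total cost of the Arrow protocol and does not increase the optimal offline cost $\mathrm{OPT}_T$.
   Context: Requests $r=(v,t)$ issued at node $v$ at time $t\ge0$; dummy request $r_0=(v_0,0)$ ordered first. Arrow protocol on a weighted tree $T$: each node $u$ has a pointer $\mathrm{link}(u)$ (itself or a neighbour), initially pointing towards $v_0$ with $\mathrm{link}(v_0)=v_0$. When $r$ is issued at $v$: if $\mathrm{link}(v)=v$, $r$ is queued behind the previous request at $v$; otherwise atomically $\mathrm{find}(r)$ is sent to $\mathrm{link}(v)$ and $\mathrm{link}(v):=v$. When $u$ receives $\mathrm{find}(r)$ from $w$: if $\mathrm{link}(u)=u$, atomically $r$ is queued behind the last request issued at $u$ and $\mathrm{link}(u):=w$; otherwise atomically forwarded to $\mathrm{link}(u)$ and $\mathrm{link}(u):=w$. In an asynchronous execution each delay over edge $e$ is at most $w(e)$. Latency of the $i$-th ordered request $r_i$ ($i\ge1$): arrival time of $\mathrm{find}(r_i)$ at the node of its predecessor minus $t_i$; total cost is the sum of latencies; worst-case cost is the supremum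 over asynchronous executions. $\mathrm{OPT}_T(R)=\min_\pi\sum_{i=1}^{|R|-1}\max\{d_T(v_{\pi(i-1)},v_{\pi(i)}),t_{\pi(i-1)}-t_{\pi(i)}\}$ over orderings with $\pi(0)=0$. *)

(* Defs.v *)
From Stdlib Require Import Reals List Permutation ClassicalEpsilon.
From Coquelicot Require Import Rbar Lub.
Import ListNotations.
Open Scope R_scope.

Section Arrow.
Context {V : Type}.

Fixpoint chain (adj : V -> V -> Prop) (p : list V) : Prop :=
  match p with
  | x :: ((y :: _) as t) => adj x y /\ chain adj t
  | _ => True
  end.

Definition spath (adj : V -> V -> Prop) (u v : V) (p : list V) : Prop :=
  (exists q, p = u :: q) /\ last p u = v /\ chain adj p /\ NoDup p.

Fixpoint pweight (w : V -> V -> R) (p : list V) : R :=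
  match p with
  | x :: ((y :: _) as t) => w x y + pweight w t
  | _ => 0
  end.

(* A finite weighted tree: symmetric irreflexive adjacency, symmetric positive
   edge weights, and a unique simple path between any two vertices
   (i.e. connected and acyclic). *)
Record wtree (adj : V -> V -> Prop) (w : V -> V -> R) : Prop := {
  wt_finite : exists l : list V, forall v, In v l;
  wt_sym : forall u v, adj u v -> adj v u;
  wt_irrefl : forall u, ~ adj u u;
  wt_wsym : forall u v, w u v = w v u;
  wt_wpos : forall u v, adj u v -> 0 < w u v;
  wt_upath : forall u v, exists! p, spath adj u v p
}.

Definition tdist (adj : V -> V -> Prop) (w : V -> V -> R) (u v : V) : R :=
  epsilon (inhabits 0) (fun x => exists p, spath adj u v p /\ x = pweight w p).

(* A request set is a list of (node, time) pairs; index 0 is the dummy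
   request r_0 = (v0, 0). Requests are identified by their index. *)
Definition rv (v0 : V) (reqs : list (V * R)) (k : nat) : V := fst (nth k reqs (v0, 0)).
Definition rt (v0 : V) (reqs : list (V * R)) (k : nat) : R := snd (nth k reqs (v0, 0)).

Definition valid_requests (v0 : V) (reqs : list (V * R)) : Prop :=
  nth_error reqs 0 = Some (v0, 0) /\
  (forall v t, In (v, t) reqs -> 0 <= t) /\
  NoDup reqs.

Definition init_link (adj : V -> V -> Prop) (v0 : V) (l : V -> V) : Prop :=
  l v0 = v0 /\
  forall u, u <> v0 -> exists p, spath adj u v0 (u :: l u :: p).

(* a message find(r_k) sent from node x to node u at time s: (k, x, u, s) *)
Definition msg : Type := (nat * V * V * R)%type.

Record config : Type := mkConf {
  c_link : V -> V;
  c_flight : list msg;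
  c_issued : nat -> Prop;
  c_cost : R
}.

Inductive step (w : V -> V -> R) (reqs : list (V * R)) : config -> R -> config -> Prop :=
  | st_issue_local : forall c k v t,
      (1 <= k)%nat -> nth_error reqs k = Some (v, t) -> ~ c_issued c k ->
      c_link c v = v ->
      step w reqs c t
        (mkConf (c_link c) (c_flight c) (fun x => x = k \/ c_issued c x) (c_cost c))
  | st_issue_send : forall c k v t (l' : V -> V),
      (1 <= k)%nat -> nth_error reqs k = Some (v, t) -> ~ c_issued c k ->
      c_link c v <> v ->
      l' v = v -> (forall y, y <> v -> l' y = c_link c y) ->
      step w reqs c t
        (mkConf l' ((k, v, c_link c v, t) :: c_flight c)
                (fun x => x = k \/ c_issued c x) (c_cost c))
  | st_deliver_queue : forall c l1 l2 k x u s tau vk tk (l' : V -> V),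
      c_flight c = l1 ++ (k, x, u, s) :: l2 ->
      s <= tau <= s + w x u ->
      c_link c u = u ->
      nth_error reqs k = Some (vk, tk) ->
      l' u = x -> (forall y, y <> u -> l' y = c_link c y) ->
      step w reqs c tau
        (mkConf l' (l1 ++ l2) (c_issued c) (c_cost c + (tau - tk)))
  | st_deliver_fwd : forall c l1 l2 k x u s tau (l' : V -> V),
      c_flight c = l1 ++ (k, x, u, s) :: l2 ->
      s <= tau <= s + w x u ->
      c_link c u <> u ->
      l' u = x -> (forall y, y <> u -> l' y = c_link c y) ->
      step w reqs c tau
        (mkConf l' (l1 ++ (k, u, c_link c u, tau) :: l2) (c_issued c) (c_cost c)).

(* a finite sequence of events with nondecreasing times (tau = time of the
   previous event) *)
Inductive steps (w : V -> V -> R) (reqs : list (V * R)) : config -> R -> config -> Prop :=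
  | steps_refl : forall c tau, steps w reqs c tau c
  | steps_cons : forall c tau tau' c1 c',
      tau <= tau' -> step w reqs c tau' c1 -> steps w reqs c1 tau' c' ->
      steps w reqs c tau c'.

Definition initial_config (adj : V -> V -> Prop) (v0 : V) (c : config) : Prop :=
  init_link adj v0 (c_link c) /\ c_flight c = [] /\
  (forall k, ~ c_issued c k) /\ c_cost c = 0.

Definition final_config (reqs : list (V * R)) (c : config) : Prop :=
  c_flight c = [] /\ forall k, (1 <= k < length reqs)%nat -> c_issued c k.

Definition arrow_costs (adj : V -> V -> Prop) (w : V -> V -> R) (v0 : V)
    (reqs : list (V * R)) (x : R) : Prop :=
  exists c0 cf, initial_config adj v0 c0 /\ steps w reqs c0 0 cf /\
    final_config reqs cf /\ x = c_cost cf.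

Definition arrow_wc (adj : V -> V -> Prop) (w : V -> V -> R) (v0 : V)
    (reqs : list (V * R)) : Rbar :=
  Lub_Rbar (arrow_costs adj w v0 reqs).

Fixpoint ord_cost (adj : V -> V -> Prop) (w : V -> V -> R) (v0 : V)
    (reqs : list (V * R)) (o : list nat) : R :=
  match o with
  | x :: ((y :: _) as t) =>
      Rmax (tdist adj w (rv v0 reqs x) (rv v0 reqs y)) (rt v0 reqs x - rt v0 reqs y)
      + ord_cost adj w v0 reqs t
  | _ => 0
  end.

Definition opt_costs (adj : V -> V -> Prop) (w : V -> V -> R) (v0 : V)
    (reqs : list (V * R)) (x : R) : Prop :=
  exists o, Permutation (0%nat :: o) (seq 0 (length reqs)) /\
            x = ord_cost adj w v0 reqs (0%nat :: o).

Definition OPT (adj : V -> V -> Prop) (w : V -> V -> R) (v0 : V)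
    (reqs : list (V * R)) : Rbar :=
  Glb_Rbar (opt_costs adj w v0 reqs).

Definition gap (adj : V -> V -> Prop) (w : V -> V -> R) (v0 : V)
    (reqs : list (V * R)) (a b : nat) : R :=
  rt v0 reqs b - rt v0 reqs a - tdist adj w (rv v0 reqs a) (rv v0 reqs b).

Definition shift_reqs (tj delta : R) (reqs : list (V * R)) : list (V * R) :=
  map (fun p => if Rle_dec tj (snd p) then (fst p, snd p - delta) else p) reqs.

End Arrow.

(* Main.v *)
Require Import Defs.
From Stdlib Require Import Reals List.
From Coquelicot Require Import Rbar.
From Stdlib Require Import Lra Lia Permutation ClassicalEpsilon Classical.
From Coquelicot Require Import Lub.
Import ListNotations.
Open Scope R_scope.

Section Tree.
Context {V : Type} (adj : V -> V -> Prop) (w : V -> V -> R) (HT : wtree adj w).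

Lemma last_indep (x : V) l d d' : last (x :: l) d = last (x :: l) d'.
Proof. revert x; induction l as [|y l IH]; intros x; [reflexivity|].
  change (last (y :: l) d = last (y :: l) d'). apply IH. Qed.

Lemma last_app_cons (l1 : list V) x l2 d : last (l1 ++ x :: l2) d = last (x :: l2) x.
Proof. induction l1 as [|a l1 IH].
  - apply last_indep.
  - change (last (a :: (l1 ++ x :: l2)) d = last (x :: l2) x). rewrite <- IH. destruct (l1 ++ x :: l2) eqn:E; [destruct l1; discriminate|]. reflexivity. Qed.

Lemma chain_app l1 (x : V) l2 :
  chain adj (l1 ++ x :: l2) <-> chain adj (l1 ++ [x]) /\ chain adj (x :: l2).
Proof.
  induction l1 as [|a l1 IH]; simpl.
  - destruct l2; simpl; tauto.
  - destruct l1 as [|b l1]; simpl in *.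
    + destruct l2; simpl; tauto.
    + rewrite IH. tauto.
Qed.

Lemma pweight_app l1 (x : V) l2 :
  pweight w (l1 ++ x :: l2) = pweight w (l1 ++ [x]) + pweight w (x :: l2).
Proof.
  induction l1 as [|a l1 IH]; simpl.
  - destruct l2; simpl; lra.
  - destruct l1 as [|b l1]; simpl in *.
    + destruct l2; simpl; lra.
    + rewrite IH. lra.
Qed.

Lemma chain_rev l : chain adj l -> chain adj (rev l).
Proof.
  induction l as [|a l IH]; simpl; auto.
  destruct l as [|b l]; simpl; auto.
  intros [Hab Hc]. simpl in IH. specialize (IH Hc).
  rewrite <- app_assoc. simpl. apply chain_app. split; auto.
  simpl. split; auto. apply (wt_sym _ _ HT); auto.
Qed.

Lemma pweight_rev l : pweight w (rev l) = pweight w l.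
Proof.
  induction l as [|a l IH]; simpl; auto.
  destruct l as [|b l]; simpl; auto.
  simpl in IH. rewrite <- app_assoc. simpl. rewrite pweight_app. rewrite IH.
  simpl. rewrite (wt_wsym _ _ HT b a). lra.
Qed.

Lemma pweight_nonneg l : chain adj l -> 0 <= pweight w l.
Proof.
  induction l as [|a l IH]; simpl; try lra.
  destruct l as [|b l]; try lra.
  intros [Hab Hc]. specialize (IH Hc). pose proof (wt_wpos _ _ HT a b Hab). lra.
Qed.

Lemma spath_unique u v p q : spath adj u v p -> spath adj u v q -> p = q.
Proof.
  intros Hp Hq. destruct (wt_upath _ _ HT u v) as [r [Hr Hu]].
  rewrite <- (Hu p Hp), <- (Hu q Hq). reflexivity.
Qed.

Lemma tdist_spec u v p : spath adj u v p -> tdist adj w u v = pweight w p.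
Proof.
  intros Hp. unfold tdist.
  destruct (epsilon_spec (inhabits 0) (fun x => exists p, spath adj u v p /\ x = pweight w p))
    as [p' [Hp' E]].
  - exists (pweight w p); eauto.
  - rewrite E. f_equal. eapply spath_unique; eauto.
Qed.

Lemma tdist_nonneg u v : 0 <= tdist adj w u v.
Proof.
  destruct (wt_upath _ _ HT u v) as [p [Hp _]].
  rewrite (tdist_spec _ _ _ Hp). apply pweight_nonneg, Hp.
Qed.

Lemma spath_refl u : spath adj u u [u].
Proof. repeat split; simpl; eauto. constructor; auto. constructor. Qed.

Lemma tdist_refl u : tdist adj w u u = 0.
Proof. rewrite (tdist_spec _ _ _ (spath_refl u)). reflexivity. Qed.

Lemma spath_edge u z : adj u z -> spath adj u z [u; z].
Proof.
  intros H. repeat split; simpl; eauto.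
  constructor.
  - intros [E|[]]; subst; eapply (wt_irrefl _ _ HT); eauto.
  - constructor; auto. constructor.
Qed.

Lemma tdist_edge u z : adj u z -> tdist adj w u z = w u z.
Proof. intros H. rewrite (tdist_spec _ _ _ (spath_edge u z H)). simpl. lra. Qed.

Lemma spath_suffix a b l1 (x : V) l2 :
  spath adj a b (l1 ++ x :: l2) -> spath adj x b (x :: l2).
Proof.
  intros [_ [Hl [Hc Hn]]]. repeat split; eauto.
  - rewrite last_app_cons in Hl. rewrite <- Hl. apply last_indep.
  - apply chain_app in Hc. tauto.
  - apply NoDup_app_remove_l in Hn. auto.
Qed.

Lemma spath_prefix a b l1 (x : V) l2 :
  spath adj a b (l1 ++ x :: l2) -> spath adj a x (l1 ++ [x]).
Proof.
  intros [[q Hq] [Hl [Hc Hn]]]. repeat split.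
  - destruct l1; simpl in *.
    + injection Hq; intros; subst. eauto.
    + injection Hq; intros; subst. eauto.
  - rewrite last_last. reflexivity.
  - apply chain_app in Hc. tauto.
  - replace (l1 ++ x :: l2) with ((l1 ++ [x]) ++ l2) in Hn by (rewrite <- app_assoc; reflexivity).
    apply NoDup_app_remove_r in Hn. auto.
Qed.

Definition towards (a x u : V) : Prop :=
  exists q, spath adj a x q /\ spath adj a u (q ++ [u]).

Lemma spath_last a x q : spath adj a x q -> exists q', q = q' ++ [x].
Proof.
  intros [[q0 Hq] [Hl _]]. subst q.
  destruct (exists_last (l := a :: q0)) as [q' [y Hy]]; [discriminate|].
  exists q'. rewrite Hy. rewrite Hy in Hl. rewrite last_last in Hl. subst. auto.
Qed.

Lemma towards_dist a x u :
  towards a x u -> tdist adj w a u = tdist adj w a x + w x u.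
Proof.
  intros [q [Hq Hu]]. rewrite (tdist_spec _ _ _ Hq), (tdist_spec _ _ _ Hu).
  destruct (spath_last _ _ _ Hq) as [q' ->].
  rewrite <- app_assoc. simpl. rewrite pweight_app. simpl. lra.
Qed.

Lemma towards_adj a x u : towards a x u -> adj x u.
Proof.
  intros [q [Hq Hu]]. destruct (spath_last _ _ _ Hq) as [q' ->].
  destruct Hu as [_ [_ [Hc _]]]. rewrite <- app_assoc in Hc. simpl in Hc.
  apply chain_app in Hc. simpl in Hc. tauto.
Qed.

Lemma towards_self a z : adj a z -> towards a a z.
Proof.
  intros H. exists [a]. split; [apply spath_refl|]. apply spath_edge; auto.
Qed.

Lemma In_split' (x : V) l : In x l -> exists l1 l2, l = l1 ++ x :: l2.
Proof. apply in_split. Qed.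

Lemma towards_step a x u z :
  towards a x u -> adj u z -> z <> x -> towards a u z.
Proof.
  intros [q [Hq Hu]] Huz Hzx. exists (q ++ [u]). split; auto.
  destruct Hu as [[q0 Hq0] [Hl [Hc Hn]]].
  assert (Hzu : z <> u). { intros ->. apply (wt_irrefl _ _ HT u); auto. }
  assert (Hzq : ~ In z (q ++ [u])).
  { intros Hin. apply in_app_or in Hin. destruct Hin as [Hin|[E|[]]]; [|congruence].
    destruct (In_split' _ _ Hin) as [l1 [l2 E]].
    assert (S1 : spath adj z u (z :: l2 ++ [u])).
    { apply (spath_suffix a u l1).
      replace (l1 ++ z :: l2 ++ [u]) with (q ++ [u]) by (rewrite E, <- app_assoc; reflexivity).
      repeat split; eauto. }
    assert (S2 : spath adj z u [z; u]).
    { apply spath_edge. apply (wt_sym _ _ HT); auto. }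
    pose proof (spath_unique _ _ _ _ S1 S2) as E2.
    injection E2; intros E3.
    destruct l2 as [|y l2]; simpl in E3.
    - subst q. destruct (spath_last _ _ _ Hq) as [q' Hq'].
      apply app_inj_tail in Hq'. destruct Hq' as [_ Hx]. congruence.
    - injection E3; intros E4 _. destruct l2; discriminate. }
  repeat split.
  - rewrite Hq0. eexists; reflexivity.
  - rewrite last_last. auto.
  - rewrite <- app_assoc. simpl. apply chain_app. split; auto. simpl; auto.
  - apply NoDup_app; auto.
    + constructor; auto. constructor.
    + intros y Hy [E|[]]. subst. auto.
Qed.

Lemma towards_between a s b p u :
  towards a s u -> towards b p u -> s <> p ->
  tdist adj w a b = tdist adj w a u + tdist adj w b u.
Proof.
  intros [qa [Hqa Hua]] [qb [Hqb Hub]] Hsp.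
  assert (Disj : forall y, In y qa -> In y qb -> False).
  { intros y Ha Hb.
    destruct (In_split' _ _ Ha) as [la [ra Ea]].
    destruct (In_split' _ _ Hb) as [lb [rb Eb]].
    assert (S1 : spath adj y u (y :: ra ++ [u])).
    { apply (spath_suffix a u la). rewrite app_comm_cons, app_assoc, <- Ea. auto. }
    assert (S2 : spath adj y u (y :: rb ++ [u])).
    { apply (spath_suffix b u lb). rewrite app_comm_cons, app_assoc, <- Eb. auto. }
    pose proof (spath_unique _ _ _ _ S1 S2) as E. injection E; intros E'.
    apply app_inj_tail in E'. destruct E' as [E' _]. subst rb.
    destruct Hqa as [_ [La _]]. destruct Hqb as [_ [Lb _]].
    rewrite Ea, last_app_cons in La. rewrite Eb, last_app_cons in Lb. congruence. }
  assert (Hp : spath adj a b (qa ++ u :: rev qb)).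
  { destruct Hua as [[q0 Hq0] [Hla [Hca Hna]]].
    destruct Hub as [[q1 Hq1] [Hlb [Hcb Hnb]]].
    repeat split.
    - destruct qa as [|c qa]; simpl in Hq0; injection Hq0 as -> _; eexists; reflexivity.
    - rewrite last_app_cons. destruct Hqb as [[qb' ->] _]. simpl rev. rewrite app_comm_cons.
      rewrite last_last. auto.
    - apply chain_app. split; auto.
      replace (u :: rev qb) with (rev (qb ++ [u])) by (rewrite rev_app_distr; reflexivity).
      apply chain_rev; auto.
    - apply NoDup_app.
      + apply NoDup_app_remove_r in Hna. auto.
      + replace (u :: rev qb) with (rev (qb ++ [u])) by (rewrite rev_app_distr; reflexivity).
        apply NoDup_rev. auto.
      + intros y Hy [E|Hy2].
        * subst. apply NoDup_remove_2 in Hna. rewrite app_nil_r in Hna. auto.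
        * apply in_rev in Hy2. eauto. }
  rewrite (tdist_spec _ _ _ Hp), (tdist_spec _ _ _ Hua), (tdist_spec _ _ _ Hub).
  rewrite pweight_app.
  replace (u :: rev qb) with (rev (qb ++ [u])) by (rewrite rev_app_distr; reflexivity).
  rewrite pweight_rev. reflexivity.
Qed.

Lemma towards_le a s b p u :
  towards a s u -> towards b p u -> s <> p ->
  tdist adj w a u <= tdist adj w a b.
Proof.
  intros. rewrite (towards_between a s b p u); auto. pose proof (tdist_nonneg b u). lra.
Qed.

End Tree.

Section Gen.
Context {V : Type} (w : V -> V -> R) (reqs : list (V * R)).

Inductive lstep : config -> R -> config -> nat -> V -> Prop :=
  | ls_issue_local : forall c k v t,
      (1 <= k)%nat -> nth_error reqs k = Some (v, t) -> ~ c_issued c k ->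
      c_link c v = v ->
      lstep c t
        (mkConf (c_link c) (c_flight c) (fun x => x = k \/ c_issued c x) (c_cost c)) k v
  | ls_issue_send : forall c k v t (l' : V -> V),
      (1 <= k)%nat -> nth_error reqs k = Some (v, t) -> ~ c_issued c k ->
      c_link c v <> v ->
      l' v = v -> (forall y, y <> v -> l' y = c_link c y) ->
      lstep c t
        (mkConf l' ((k, v, c_link c v, t) :: c_flight c)
                (fun x => x = k \/ c_issued c x) (c_cost c)) k v
  | ls_deliver_queue : forall c l1 l2 k x u s tau vk tk (l' : V -> V),
      c_flight c = l1 ++ (k, x, u, s) :: l2 ->
      s <= tau <= s + w x u ->
      c_link c u = u ->
      nth_error reqs k = Some (vk, tk) ->
      l' u = x -> (forall y, y <> u -> l' y = c_link c y) ->
      lstep c tau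
        (mkConf l' (l1 ++ l2) (c_issued c) (c_cost c + (tau - tk))) k u
  | ls_deliver_fwd : forall c l1 l2 k x u s tau (l' : V -> V),
      c_flight c = l1 ++ (k, x, u, s) :: l2 ->
      s <= tau <= s + w x u ->
      c_link c u <> u ->
      l' u = x -> (forall y, y <> u -> l' y = c_link c y) ->
      lstep c tau
        (mkConf l' (l1 ++ (k, u, c_link c u, tau) :: l2) (c_issued c) (c_cost c)) k u.

Lemma lstep_step c t c' k u : lstep c t c' k u -> step w reqs c t c'.
Proof. intros H; destruct H; econstructor; eauto. Qed.

Lemma step_lstep c t c' : step w reqs c t c' -> exists k u, lstep c t c' k u.
Proof. intros H; destruct H; do 2 eexists; econstructor; eauto. Qed.

Definition ceq (c d : @config V) : Prop :=
  (forall y, c_link c y = c_link d y) /\ Permutation (c_flight c) (c_flight d) /\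
  (forall x, c_issued c x <-> c_issued d x) /\ c_cost c = c_cost d.

Lemma ceq_refl (c : @config V) : ceq c c.
Proof. repeat split; auto. Qed.
Lemma ceq_sym (c d : @config V) : ceq c d -> ceq d c.
Proof. intros [H1 [H2 [H3 H4]]]. repeat split; intros; try symmetry; auto; apply H3; auto. Qed.
Lemma ceq_trans (c d e : @config V) : ceq c d -> ceq d e -> ceq c e.
Proof. intros [H1 [H2 [H3 H4]]] [G1 [G2 [G3 G4]]]. repeat split.
  - intros; rewrite H1; auto.
  - eapply perm_trans; eauto.
  - intros; apply G3, H3; auto.
  - intros; apply H3, G3; auto.
  - congruence.
Qed.

Definition ol (o : option (@msg V)) : list (@msg V) := match o with Some m => [m] | None => [] end.
Definition msgk (m : @msg V) : nat := fst (fst (fst m)).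

Record eff := Eff { e_link : V; e_cons : option (@msg V); e_prod : option (@msg V); e_iss : bool; e_dc : R }.

Definition enabled (lk : V) (isk : Prop) (tau : R) (k : nat) (u : V) (e : eff) : Prop :=
  ((1 <= k)%nat /\ nth_error reqs k = Some (u, tau) /\ ~ isk /\ lk = u /\ e = Eff u None None true 0)
  \/ ((1 <= k)%nat /\ nth_error reqs k = Some (u, tau) /\ ~ isk /\ lk <> u /\
      e = Eff u None (Some (k, u, lk, tau)) true 0)
  \/ (exists x s vk tk, s <= tau <= s + w x u /\ lk = u /\ nth_error reqs k = Some (vk, tk) /\
      e = Eff x (Some (k, x, u, s)) None false (tau - tk))
  \/ (exists x s, s <= tau <= s + w x u /\ lk <> u /\
      e = Eff x (Some (k, x, u, s)) (Some (k, u, lk, tau)) false 0).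

Definition applied (c : @config V) (u : V) (k : nat) (e : eff) (c' : @config V) : Prop :=
  c_link c' u = e_link e /\ (forall y, y <> u -> c_link c' y = c_link c y) /\
  (exists L, Permutation (c_flight c) (ol (e_cons e) ++ L) /\
             Permutation (c_flight c') (ol (e_prod e) ++ L)) /\
  (forall x, c_issued c' x <-> (e_iss e = true /\ x = k) \/ c_issued c x) /\
  c_cost c' = c_cost c + e_dc e.

Lemma lstep_abs c t c' k u : lstep c t c' k u ->
  exists e, enabled (c_link c u) (c_issued c k) t k u e /\ applied c u k e c'.
Proof.
  intros H; destruct H.
  - eexists; split. { left; repeat split; eauto. }
    repeat split; simpl; auto.
    + exists (c_flight c); simpl; split; auto.
    + intros [E|E]; [left; split; auto | right; auto].
    + intros [[_ E]|E]; auto.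
    + lra.
  - eexists; split. { right; left; repeat split; eauto. }
    repeat split; simpl; auto.
    + exists (c_flight c); simpl; split; auto.
    + intros [E|E]; [left; split; auto | right; auto].
    + intros [[_ E]|E]; auto.
    + lra.
  - eexists; split. { right; right; left; exists x, s, vk, tk; repeat split; eauto; lra. }
    repeat split; simpl; auto.
    + exists (l1 ++ l2); simpl; split; auto. rewrite H. apply Permutation_sym, Permutation_middle.
    + intros [[E _]|E]; [discriminate|auto].

  - eexists; split. { right; right; right; exists x, s; repeat split; eauto; lra. }
    repeat split; simpl; auto.
    + exists (l1 ++ l2); simpl; split.
      * rewrite H. apply Permutation_sym, Permutation_middle.
      * apply Permutation_sym, Permutation_middle.
    + intros [[E _]|E]; [discriminate|auto].
    + lra.
Qed.

Lemma perm_split (m : @msg V) F L : Permutation F (m :: L) ->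
  exists l1 l2, F = l1 ++ m :: l2 /\ Permutation L (l1 ++ l2).
Proof.
  intros HP. assert (In m F) by (apply (Permutation_in m (Permutation_sym HP)); left; auto).
  destruct (in_split _ _ H) as [l1 [l2 ->]]. exists l1, l2. split; auto.
  apply Permutation_cons_inv with m. eapply perm_trans; [apply Permutation_sym, HP|].
  apply Permutation_sym, Permutation_middle.
Qed.

Lemma abs_lstep c t c' k u e :
  enabled (c_link c u) (c_issued c k) t k u e -> applied c u k e c' ->
  exists c'', lstep c t c'' k u /\ ceq c' c''.
Proof.
  intros Hen [A1 [A2 [[L [P1 P2]] [A4 A5]]]].
  destruct Hen as [[H1 [H2 [H3 [H4 ->]]]] | [[H1 [H2 [H3 [H4 ->]]]] |
    [[x [s [vk [tk [H1 [H2 [H3 ->]]]]]]] | [x [s [H1 [H2 ->]]]]]]]; simpl in *.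
  - eexists; split. { apply ls_issue_local; eauto. }
    repeat split; simpl.
    + intros y. destruct (classic (y = u)) as [->|n]; [congruence| auto].
    + eapply perm_trans; eauto. apply Permutation_sym; auto.
    + intros Hx. apply A4 in Hx. destruct Hx as [[_ E]|E]; auto.
    + intros Hx. apply A4. destruct Hx as [E|E]; auto.
    + lra.
  - eexists; split. { apply ls_issue_send with (l' := c_link c'); eauto. }
    repeat split; simpl.
    + eapply perm_trans; eauto. simpl. constructor. apply Permutation_sym; auto.
    + intros Hx. apply A4 in Hx. destruct Hx as [[_ E]|E]; auto.
    + intros Hx. apply A4. destruct Hx as [E|E]; auto.
    + lra.
  - destruct (perm_split _ _ _ P1) as [l1 [l2 [E HL]]].
    eexists; split. { eapply ls_deliver_queue with (l' := c_link c'); eauto. }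
    repeat split; simpl.
    + eapply perm_trans; eauto.
    + intros Hx. apply A4 in Hx. destruct Hx as [[F _]|F]; [discriminate|auto].
    + intros Hx. apply A4. auto.
    + auto.
  - destruct (perm_split _ _ _ P1) as [l1 [l2 [E HL]]].
    eexists; split. { eapply ls_deliver_fwd with (l' := c_link c'); eauto. }
    repeat split; simpl.
    + eapply perm_trans; eauto. eapply perm_trans; [|apply Permutation_middle]. constructor; auto.
    + intros Hx. apply A4 in Hx. destruct Hx as [[F _]|F]; [discriminate|auto].
    + intros Hx. apply A4. auto.
    + lra.
Qed.

Lemma enabled_iff lk P Q t k u e : enabled lk P t k u e -> (P <-> Q) -> enabled lk Q t k u e.
Proof.
  intros H HPQ. unfold enabled in *.
  destruct H as [H|[H|H]]; [left|right;left|right;right]; tauto.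
Qed.

Lemma applied_ceq c d u k e c' : applied c u k e c' -> ceq c d -> applied d u k e c'.
Proof.
  intros [A1 [A2 [[L [P1 P2]] [A4 A5]]]] [C1 [C2 [C3 C4]]].
  repeat split; auto.
  - intros y Hy. rewrite A2; auto.
  - exists L; split; auto. eapply perm_trans; [apply Permutation_sym, C2|]; auto.
  - intros Hx. apply A4 in Hx. destruct Hx; [left|right; apply C3]; auto.
  - intros Hx. apply A4. destruct Hx; [left|right; apply C3]; auto.
  - congruence.
Qed.

Lemma lstep_ceq c d t c' k u : lstep c t c' k u -> ceq c d ->
  exists d', lstep d t d' k u /\ ceq c' d'.
Proof.
  intros H Hcd. destruct (lstep_abs _ _ _ _ _ H) as [e [He Ha]].
  apply abs_lstep with (e := e).
  - destruct Hcd as [C1 [_ [C3 _]]]. rewrite <- C1. eapply enabled_iff; eauto.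
  - eapply applied_ceq; eauto.
Qed.

Lemma enabled_msgk lk isk t k u e : enabled lk isk t k u e ->
  (forall m, In m (ol (e_cons e)) -> msgk m = k) /\ (forall m, In m (ol (e_prod e)) -> msgk m = k).
Proof.
  intros H. unfold enabled in H.
  destruct H as [[_ [_ [_ [_ ->]]]] | [[_ [_ [_ [_ ->]]]] |
    [[x [s [vk [tk [_ [_ [_ ->]]]]]]] | [x [s [_ [_ ->]]]]]]]; simpl;
  split; intros m Hm; repeat (destruct Hm as [<-|Hm]; [reflexivity|]); destruct Hm.
Qed.

Lemma ol_len o : (length (ol o) <= 1)%nat.
Proof. destruct o; simpl; lia. Qed.

Lemma perm_swap_lemma (F F1 F2 C1 P1 L1 C2 P2 L2 : list (@msg V)) :
  Permutation F (C1 ++ L1) -> Permutation F1 (P1 ++ L1) ->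
  Permutation F1 (C2 ++ L2) -> Permutation F2 (P2 ++ L2) ->
  (forall m, In m C2 -> ~ In m P1) -> (length C2 <= 1)%nat ->
  exists N, Permutation F (C2 ++ C1 ++ N) /\ Permutation F2 (P1 ++ P2 ++ N).
Proof.
  intros H1 H2 H3 H4 Hd Hl.
  destruct C2 as [|m2 [|m3 C2]]; simpl in Hl; try lia.
  - exists L1. simpl. split; auto.
    eapply perm_trans; [apply H4|]. rewrite app_assoc.
    eapply perm_trans; [|apply Permutation_app_tail; apply Permutation_app_comm].
    rewrite <- app_assoc. apply Permutation_app_head.
    eapply perm_trans; [apply Permutation_sym, H3|]. auto.
  - assert (Hin : In m2 (P1 ++ L1)).
    { apply (Permutation_in m2 H2). apply (Permutation_in m2 (Permutation_sym H3)). left; auto. }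
    apply in_app_or in Hin. destruct Hin as [Hin|Hin].
    { exfalso. apply (Hd m2); [left|]; auto. }
    destruct (in_split _ _ Hin) as [A [B ->]].
    exists (A ++ B). split.
    + eapply perm_trans; [apply H1|]. simpl.
      eapply perm_trans; [apply Permutation_app_head, Permutation_sym, Permutation_middle|].
      apply Permutation_sym, Permutation_middle.
    + assert (HL2 : Permutation L2 (P1 ++ A ++ B)).
      { apply Permutation_cons_inv with m2.
        eapply perm_trans; [apply Permutation_sym, H3|].
        eapply perm_trans; [apply H2|].
        eapply perm_trans; [apply Permutation_app_head, Permutation_sym, Permutation_middle|].
        apply Permutation_sym, Permutation_middle. }
      eapply perm_trans; [apply H4|].
      eapply perm_trans; [apply Permutation_app_head, HL2|].
      rewrite (app_assoc P2 P1), (app_assoc P1 P2). apply Permutation_app_tail. apply Permutation_app_comm.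
Qed.

Definition upd (f : V -> V) (u : V) (n : V) : V -> V :=
  fun y => if excluded_middle_informative (y = u) then n else f y.

Lemma upd_eq f u n : upd f u n u = n.
Proof. unfold upd. destruct excluded_middle_informative; congruence. Qed.
Lemma upd_neq f u n y : y <> u -> upd f u n y = f y.
Proof. unfold upd. destruct excluded_middle_informative; congruence. Qed.

Lemma lstep_swap c s c1 k1 u1 t c2 k2 u2 :
  lstep c s c1 k1 u1 -> lstep c1 t c2 k2 u2 -> u1 <> u2 -> k1 <> k2 ->
  exists c1' c2', lstep c t c1' k2 u2 /\ lstep c1' s c2' k1 u1 /\ ceq c2 c2'.
Proof.
  intros S1 S2 Hu Hk.
  destruct (lstep_abs _ _ _ _ _ S1) as [e1 [E1 [A1 [A2 [[L1 [P1 P2]] [A4 A5]]]]]].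
  destruct (lstep_abs _ _ _ _ _ S2) as [e2 [E2 [B1 [B2 [[L2 [Q1 Q2]] [B4 B5]]]]]].
  destruct (enabled_msgk _ _ _ _ _ _ E1) as [K1c K1p].
  destruct (enabled_msgk _ _ _ _ _ _ E2) as [K2c K2p].
  destruct (perm_swap_lemma (c_flight c) (c_flight c1) (c_flight c2)
     (ol (e_cons e1)) (ol (e_prod e1)) L1 (ol (e_cons e2)) (ol (e_prod e2)) L2)
    as [N [HN1 HN2]]; auto.
  { intros m Hm Hm'. apply K2c in Hm. apply K1p in Hm'. congruence. }
  { apply ol_len. }
  set (c1' := mkConf (upd (c_link c) u2 (e_link e2)) (ol (e_prod e2) ++ ol (e_cons e1) ++ N)
                     (fun x => (e_iss e2 = true /\ x = k2) \/ c_issued c x) (c_cost c + e_dc e2)).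
  set (c2' := mkConf (upd (upd (c_link c) u2 (e_link e2)) u1 (e_link e1))
                     (ol (e_prod e1) ++ ol (e_prod e2) ++ N)
                     (fun x => (e_iss e1 = true /\ x = k1) \/ (e_iss e2 = true /\ x = k2) \/ c_issued c x)
                     (c_cost c + e_dc e2 + e_dc e1)).
  assert (Hen2 : enabled (c_link c u2) (c_issued c k2) t k2 u2 e2).
  { rewrite <- (A2 u2) by auto. eapply enabled_iff; [apply E2|].
    rewrite A4. split; [intros [[_ E]|E]; [congruence|auto] | auto]. }
  assert (Hap2 : applied c u2 k2 e2 c1').
  { repeat split; simpl; auto.
    - apply upd_eq.
    - intros y Hy; apply upd_neq; auto.
    - exists (ol (e_cons e1) ++ N); split; auto. }
  destruct (abs_lstep _ _ _ _ _ _ Hen2 Hap2) as [c1'' [S1' Hc1]].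
  assert (Hen1 : enabled (c_link c1' u1) (c_issued c1' k1) s k1 u1 e1).
  { simpl. rewrite upd_neq by auto. eapply enabled_iff; [apply E1|].
    split; [auto | intros [[_ E]|E]; [congruence|auto]]. }
  assert (Hap1 : applied c1' u1 k1 e1 c2').
  { repeat split; simpl; auto.
    all: first [apply upd_eq | (intros y Hy; apply upd_neq; auto) |
      (exists (ol (e_prod e2) ++ N); split; [rewrite !app_assoc; apply Permutation_app_tail, Permutation_app_comm| auto])
      | tauto | lra]. }
  destruct (abs_lstep _ _ _ _ _ _ Hen1 Hap1) as [c2'' [S2' Hc2]].
  destruct (lstep_ceq _ _ _ _ _ _ S2' Hc1) as [c2''' [S2'' Hc2']].
  exists c1'', c2'''. split; auto. split; auto.
  apply ceq_trans with c2'; [|eapply ceq_trans; eauto].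
  repeat split; simpl.
  - intros y. destruct (classic (y = u1)) as [->|n1].
    + rewrite upd_eq. rewrite B2 by auto. auto.
    + rewrite upd_neq by auto. destruct (classic (y = u2)) as [->|n2].
      * rewrite upd_eq. auto.
      * rewrite upd_neq by auto. rewrite B2, A2 by auto. auto.
  - auto.
  - intros Hx. apply B4 in Hx. destruct Hx as [Hx|Hx]; auto. apply A4 in Hx. tauto.
  - intros Hx. apply B4. rewrite A4. tauto.
  - rewrite B5, A5. lra.
Qed.

(* traces: reversed lists of events (time, request, node) *)
Inductive trace (c0 : @config V) : list (R * nat * V) -> config -> R -> Prop :=
  | tr_nil : trace c0 [] c0 0
  | tr_cons : forall l c th t c' k u,
      trace c0 l c th -> th <= t -> lstep c t c' k u -> trace c0 ((t, k, u) :: l) c' t.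

Lemma trace_steps c0 l c th : trace c0 l c th ->
  forall c'', steps w reqs c th c'' -> steps w reqs c0 0 c''.
Proof.
  induction 1; intros c'' Hs; auto.
  apply IHtrace. eapply steps_cons; eauto. eapply lstep_step; eauto.
Qed.

Lemma steps_trace c0 c th cf : steps w reqs c th cf ->
  forall l, trace c0 l c th -> exists l' th', trace c0 l' cf th'.
Proof.
  induction 1; intros l Hl; eauto.
  destruct (step_lstep _ _ _ H0) as [k [u Hl1]].
  apply (IHsteps ((tau', k, u) :: l)). econstructor; eauto.
Qed.

Lemma trace_time c0 l c th : trace c0 l c th -> forall e, In e l -> fst (fst e) <= th.
Proof.
  induction 1; intros e He; [destruct He|]. destruct He as [<-|He]; simpl; try lra.
  specialize (IHtrace e He). lra.
Qed.

Lemma insertion c0 l c th t c2 k u :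
  trace c0 l c th -> lstep c t c2 k u -> 0 <= t ->
  (forall s k' u', In (s, k', u') l -> t < s -> u' <> u /\ k' <> k) ->
  exists l' c2' th', trace c0 l' c2' th' /\ ceq c2 c2' /\ th' <= Rmax th t /\
     (forall e, In e l' -> e = (t, k, u) \/ In e l).
Proof.
  intros Htr. revert t c2 k u. induction Htr as [|l c th s c1 k1 u1 Htr IH Hth S1];
    intros t c2 k u S Ht Hcond.
  - exists [(t, k, u)], c2, t. refine (conj _ (conj _ (conj _ _))).
    + econstructor; eauto. constructor.
    + apply ceq_refl.
    + apply Rmax_r.
    + intros e [<-|[]]; auto.
  - destruct (Rle_dec s t) as [Hst|Hst].
    + exists ((t, k, u) :: (s, k1, u1) :: l), c2, t. refine (conj _ (conj _ (conj _ _))).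
      * econstructor; eauto. econstructor; eauto.
      * apply ceq_refl.
      * apply Rmax_r.
      * intros e [<-|He]; auto.
    + destruct (Hcond s k1 u1 (or_introl eq_refl) ltac:(lra)) as [Hu Hk].
      destruct (lstep_swap _ _ _ _ _ _ _ _ _ S1 S Hu Hk) as [c1' [c2' [T1 [T2 Hc]]]].
      destruct (IH t c1' k u T1 Ht) as [l' [c1'' [th' [Tr' [Hc1 [Hth' Hin]]]]]].
      { intros s' k' u' Hin Hlt. apply (Hcond s' k' u'); [right; exact Hin | exact Hlt]. }
      destruct (lstep_ceq _ _ _ _ _ _ T2 Hc1) as [c2'' [T2' Hc2]].
      exists ((s, k1, u1) :: l'), c2'', s. refine (conj _ (conj _ (conj _ _))).
      * econstructor; eauto. unfold Rmax in Hth'. destruct (Rle_dec th t); lra.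
      * eapply ceq_trans; eauto.
      * apply Rmax_l.
      * intros e [<-|He]; [right; left; reflexivity|]. destruct (Hin e He); auto. right; right; auto.
Qed.

End Gen.

Section FOP.
Context {T : Type} (Rl : T -> T -> Prop) (Rsym : forall a b, Rl a b -> Rl b a).

Lemma FOP_remove l1 m l2 : ForallOrdPairs Rl (l1 ++ m :: l2) -> ForallOrdPairs Rl (l1 ++ l2).
Proof.
  induction l1 as [|a l1 IH]; simpl; intros H; inversion H; subst; auto.
  constructor; auto. rewrite Forall_forall in *. intros y Hy. apply H2.
  apply in_app_or in Hy; apply in_or_app; destruct Hy; [left|right;right]; auto.
Qed.

Lemma FOP_remove_rel l1 m l2 : ForallOrdPairs Rl (l1 ++ m :: l2) ->
  forall m', In m' (l1 ++ l2) -> Rl m m'.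
Proof.
  induction l1 as [|a l1 IH]; simpl; intros H m' Hm'; inversion H; subst.
  - rewrite Forall_forall in H2. auto.
  - destruct Hm' as [<-|Hm'].
    + apply Rsym. rewrite Forall_forall in H2. apply H2. apply in_or_app. right; left; auto.
    + apply IH; auto.
Qed.

Lemma FOP_insert l1 m l2 : ForallOrdPairs Rl (l1 ++ l2) ->
  (forall m', In m' (l1 ++ l2) -> Rl m m') -> ForallOrdPairs Rl (l1 ++ m :: l2).
Proof.
  induction l1 as [|a l1 IH]; simpl; intros H Hm.
  - constructor; auto. rewrite Forall_forall; auto.
  - inversion H; subst. constructor.
    + rewrite Forall_forall in *. intros y Hy. apply in_app_or in Hy.
      destruct Hy as [Hy|[<-|Hy]]; auto.
      * apply H2. apply in_or_app; auto.
      * apply H2. apply in_or_app; auto.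
    + apply IH; auto.
Qed.
End FOP.

Section Main.
Context {V : Type} (adj : V -> V -> Prop) (w : V -> V -> R)
    (reqs : list (V * R)) (v0 : V) (i j a b : nat)
  (HT : wtree adj w)
  (HV : valid_requests v0 reqs)
  (Hi : (i < length reqs)%nat) (Hj : (j < length reqs)%nat) (Hij : i <> j)
  (Htij : rt v0 reqs i <= rt v0 reqs j)
  (Hcons : forall k, (k < length reqs)%nat ->
     ~ (rt v0 reqs i < rt v0 reqs k < rt v0 reqs j))
  (Ha : (a < length reqs)%nat) (Hb : (b < length reqs)%nat)
  (Hta : rt v0 reqs a <= rt v0 reqs i) (Htb : rt v0 reqs j <= rt v0 reqs b)
  (Hmin : forall a' b', (a' < length reqs)%nat -> (b' < length reqs)%nat ->
     rt v0 reqs a' <= rt v0 reqs i -> rt v0 reqs j <= rt v0 reqs b' ->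
     gap adj w v0 reqs a b <= gap adj w v0 reqs a' b')
  (Hpos : 0 < gap adj w v0 reqs a b).

Let tj := rt v0 reqs j.
Let dl := gap adj w v0 reqs a b.
Let reqs' := shift_reqs tj dl reqs.
Let shf := (fun p : V * R => if Rle_dec tj (snd p) then (fst p, snd p - dl) else p).

Lemma rt_nonneg k : (k < length reqs)%nat -> 0 <= rt v0 reqs k.
Proof.
  intros Hk. destruct HV as [_ [H _]]. unfold rt.
  destruct (nth k reqs (v0, 0)) as [v t] eqn:E. simpl.
  apply (H v). rewrite <- E. apply nth_In. auto.
Qed.

Lemma early_le_ti k : (k < length reqs)%nat -> rt v0 reqs k < tj -> rt v0 reqs k <= rt v0 reqs i.
Proof.
  intros Hk H. destruct (Rle_dec (rt v0 reqs k) (rt v0 reqs i)) as [|n]; auto.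
  exfalso. apply (Hcons k Hk). unfold tj in H. lra.
Qed.

Lemma gap_bound x y : (x < length reqs)%nat -> (y < length reqs)%nat ->
  rt v0 reqs x < tj -> tj <= rt v0 reqs y ->
  dl <= rt v0 reqs y - rt v0 reqs x - tdist adj w (rv v0 reqs x) (rv v0 reqs y).
Proof.
  intros Hx Hy H1 H2. apply (Hmin x y Hx Hy); auto. apply early_le_ti; auto.
Qed.

Lemma dl_le y : (y < length reqs)%nat -> tj <= rt v0 reqs y -> dl <= rt v0 reqs y.
Proof.
  intros Hy H. pose proof (Hmin a y Ha Hy Hta H). unfold gap in H0.
  pose proof (rt_nonneg a Ha). pose proof (tdist_nonneg adj w HT (rv v0 reqs a) (rv v0 reqs y)).
  unfold dl, gap. lra.
Qed.

Lemma tj_pos : dl <= tj.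
Proof. apply dl_le; auto. unfold tj; lra. Qed.

Lemma len' : length reqs' = length reqs.
Proof. unfold reqs', shift_reqs. apply length_map. Qed.

Lemma nth_shift k : (k < length reqs)%nat -> nth k reqs' (v0, 0) = shf (nth k reqs (v0, 0)).
Proof.
  intros Hk. unfold reqs', shift_reqs. fold shf.
  rewrite (nth_indep _ (v0, 0) (shf (v0, 0))) by (rewrite length_map; auto).
  apply map_nth.
Qed.

Lemma rv_shift k : (k < length reqs)%nat -> rv v0 reqs' k = rv v0 reqs k.
Proof. intros Hk. unfold rv. rewrite nth_shift by auto. unfold shf.
  destruct (Rle_dec _ _); reflexivity. Qed.

Lemma rt_shift k : (k < length reqs)%nat ->
  rt v0 reqs' k = if Rle_dec tj (rt v0 reqs k) then rt v0 reqs k - dl else rt v0 reqs k.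
Proof. intros Hk. unfold rt. rewrite nth_shift by auto. unfold shf.
  destruct (Rle_dec _ _); reflexivity. Qed.

Lemma term_le x y : (x < length reqs)%nat -> (y < length reqs)%nat ->
  Rmax (tdist adj w (rv v0 reqs' x) (rv v0 reqs' y)) (rt v0 reqs' x - rt v0 reqs' y)
  <= Rmax (tdist adj w (rv v0 reqs x) (rv v0 reqs y)) (rt v0 reqs x - rt v0 reqs y).
Proof.
  intros Hx Hy. rewrite !rv_shift, !rt_shift by auto.
  set (d := tdist adj w (rv v0 reqs x) (rv v0 reqs y)).
  pose proof (tdist_nonneg adj w HT (rv v0 reqs x) (rv v0 reqs y)) as Hd. fold d in Hd.
  destruct (Rle_dec tj (rt v0 reqs x)) as [H1|H1];
  destruct (Rle_dec tj (rt v0 reqs y)) as [H2|H2].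
  - replace (rt v0 reqs x - dl - (rt v0 reqs y - dl)) with (rt v0 reqs x - rt v0 reqs y) by ring. lra.
  - assert (0 < dl) by exact Hpos. unfold Rmax; repeat destruct Rle_dec; lra.
  - pose proof (gap_bound x y Hx Hy (Rnot_le_lt _ _ H1) H2). fold d in H.
    unfold Rmax; repeat destruct Rle_dec; lra.
  - lra.
Qed.

Lemma ord_cost_le o : (forall x, In x o -> (x < length reqs)%nat) ->
  ord_cost adj w v0 reqs' o <= ord_cost adj w v0 reqs o.
Proof.
  induction o as [|x o IH]; intros Hin; simpl; try lra.
  destruct o as [|y o]; try lra.
  pose proof (term_le x y (Hin x (or_introl eq_refl)) (Hin y (or_intror (or_introl eq_refl)))).
  assert (ord_cost adj w v0 reqs' (y :: o) <= ord_cost adj w v0 reqs (y :: o)).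
  { apply IH. intros z Hz. apply Hin. right. auto. }
  lra.
Qed.

Lemma opt_part : Rbar_le (OPT adj w v0 reqs') (OPT adj w v0 reqs).
Proof.
  unfold OPT.
  destruct (Glb_Rbar_correct (opt_costs adj w v0 reqs')) as [Hlb' _].
  destruct (Glb_Rbar_correct (opt_costs adj w v0 reqs)) as [_ Hgr].
  apply Hgr. intros x [o [Hp ->]].
  assert (Hin : forall z, In z (0%nat :: o) -> (z < length reqs)%nat).
  { intros z Hz. apply (Permutation_in z Hp) in Hz. apply in_seq in Hz. lia. }
  apply Rbar_le_trans with (ord_cost adj w v0 reqs' (0%nat :: o)).
  - apply Hlb'. exists o. split; auto. rewrite len'. auto.
  - apply (ord_cost_le (0%nat :: o)). auto.
Qed.


Definition phim (m : @msg V) : @msg V :=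
  match m with (k, x, u, s) =>
    if Rle_dec tj (rt v0 reqs k) then (k, x, u, s - dl) else (k, x, u, s) end.

Definition phic (c : @config V) : @config V :=
  mkConf (c_link c) (map phim (c_flight c)) (c_issued c) (c_cost c).

Definition trf (e : R * nat * V) : R * nat * V :=
  match e with (t, k, u) =>
    (if Rle_dec tj (rt v0 reqs k) then t - dl else t, k, u) end.

Lemma nth_error_info k v t : nth_error reqs k = Some (v, t) ->
  rv v0 reqs k = v /\ rt v0 reqs k = t /\ (k < length reqs)%nat.
Proof.
  intros H. assert (Hk : (k < length reqs)%nat).
  { apply nth_error_Some. congruence. }
  apply (nth_error_nth _ _ (v0, 0)) in H. unfold rv, rt. rewrite H. auto.
Qed.

Lemma nth_error_shift k v t : nth_error reqs k = Some (v, t) ->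
  nth_error reqs' k = Some (v, if Rle_dec tj (rt v0 reqs k) then t - dl else t).
Proof.
  intros H. destruct (nth_error_info _ _ _ H) as [_ [Ht _]].
  unfold reqs', shift_reqs. rewrite nth_error_map, H. simpl. rewrite Ht. destruct (Rle_dec tj t); reflexivity.
Qed.

Lemma lstep_shift c t c' k u : lstep w reqs c t c' k u ->
  exists c'', lstep w reqs' (phic c) (if Rle_dec tj (rt v0 reqs k) then t - dl else t) c'' k u /\
    ceq c'' (phic c').
Proof.
  intros H; destruct H.
  - apply nth_error_shift in H0.
    destruct (Rle_dec tj (rt v0 reqs k)).
    + eexists; split; [apply ls_issue_local; eauto|]. apply ceq_refl.
    + eexists; split; [apply ls_issue_local; eauto|]. apply ceq_refl.
  - apply nth_error_shift in H0.
    destruct (Rle_dec tj (rt v0 reqs k)) eqn:E.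
    + eexists; split; [apply ls_issue_send with (l' := l'); eauto|].
      unfold phic; simpl. rewrite E. apply ceq_refl.
    + eexists; split; [apply ls_issue_send with (l' := l'); eauto|].
      unfold phic; simpl. rewrite E. apply ceq_refl.
  - apply nth_error_shift in H2.
    assert (Hf : c_flight (phic c) = map phim l1 ++ phim (k, x, u, s) :: map phim l2).
    { unfold phic; simpl. rewrite H, map_app. reflexivity. }
    simpl in Hf. destruct (Rle_dec tj (rt v0 reqs k)) eqn:E.
    + eexists; split; [eapply ls_deliver_queue with (l' := l'); eauto; simpl; lra|].
      repeat split; simpl; auto. rewrite map_app. auto. lra.
    + eexists; split; [eapply ls_deliver_queue with (l' := l'); eauto; simpl; lra|].
      repeat split; simpl; auto. rewrite map_app. auto.
  - assert (Hf : c_flight (phic c) = map phim l1 ++ phim (k, x, u, s) :: map phim l2).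
    { unfold phic; simpl. rewrite H, map_app. reflexivity. }
    simpl in Hf. destruct (Rle_dec tj (rt v0 reqs k)) eqn:E.
    + eexists; split; [eapply ls_deliver_fwd with (l' := l'); eauto; simpl; lra|].
      repeat split; simpl; auto. rewrite map_app. simpl. rewrite E. auto.
    + eexists; split; [eapply ls_deliver_fwd with (l' := l'); eauto; simpl; lra|].
      repeat split; simpl; auto. rewrite map_app. simpl. rewrite E. auto.
Qed.

Definition msg_ok (c : @config V) (m : @msg V) : Prop :=
  match m with (k, x, u, s) =>
    adj x u /\ c_link c u <> x /\ c_link c x <> u /\
    exists vk tk, nth_error reqs k = Some (vk, tk) /\ tk <= s /\
      s <= tk + tdist adj w vk x /\ towards adj vk x u end.

Definition diff_edge (m m' : @msg V) : Prop :=
  match m, m' with (_, x, u, _), (_, x', u', _) =>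
    ~ ((x = x' /\ u = u') \/ (x = u' /\ u = x')) end.

Lemma diff_edge_sym m m' : diff_edge m m' -> diff_edge m' m.
Proof. destruct m as [[[k x] u] s], m' as [[[k' x'] u'] s']; simpl. intuition. Qed.

Definition INV (c : @config V) : Prop :=
  (forall u, c_link c u <> u -> adj u (c_link c u) /\ c_link c (c_link c u) <> u) /\
  (forall m, In m (c_flight c) -> msg_ok c m) /\
  ForallOrdPairs diff_edge (c_flight c).

Lemma adj_neq x u : adj x u -> x <> u.
Proof. intros H ->. apply (wt_irrefl _ _ HT u); auto. Qed.

Lemma lstep_link_other c t c' k u : lstep w reqs c t c' k u ->
  forall y, y <> u -> c_link c' y = c_link c y.
Proof. intros H; destruct H; simpl; auto. Qed.

(* old message, link changed at u to x by delivery of (k,x,u,s) *)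
Lemma msg_ok_deliver c (l' : V -> V) x u m' :
  msg_ok c m' -> diff_edge (0%nat, x, u, 0) m' -> l' u = x ->
  (forall y, y <> u -> l' y = c_link c y) ->
  msg_ok (mkConf l' nil (fun _ => False) 0) m'.
Proof.
  destruct m' as [[[k' x'] u'] s']. simpl. intros [A1 [A2 [A3 A4]]] Hd Hl Ho.
  repeat split; auto.
  - destruct (classic (u' = u)) as [->|n].
    + rewrite Hl. intros ->. apply Hd. left; auto.
    + rewrite Ho; auto.
  - destruct (classic (x' = u)) as [->|n].
    + rewrite Hl. intros ->. apply Hd. right; auto.
    + rewrite Ho; auto.
Qed.

Lemma msg_ok_link c c' m : msg_ok c m -> (forall y, c_link c' y = c_link c y) -> msg_ok c' m.
Proof.
  destruct m as [[[k x] u] s]. simpl. intros [A1 [A2 [A3 A4]]] H. rewrite !H. auto.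
Qed.

Lemma msg_ok_same l' c m : msg_ok (mkConf l' nil (fun _ => False) 0) m ->
  c_link c = l' -> msg_ok c m.
Proof. intros H E. eapply msg_ok_link; eauto. intros y; rewrite E; reflexivity. Qed.

Lemma INV_step c t c' k u : INV c -> lstep w reqs c t c' k u -> INV c'.
Proof.
  intros [Ia [Ib Ic]] H. destruct H as [c k v t H1 H2 H3 H4 | c k v t l' H1 H2 H3 H4 H5 H6 |
    c l1 l2 k x u s tau vk tk l' H1 H2 H3 H4 H5 H6 | c l1 l2 k x u s tau l' H1 H2 H3 H4 H5];
    simpl in *.
  - refine (conj _ (conj _ _)); auto.
  -
    destruct (Ia v H4) as [Adj Back].
    set (z := c_link c v) in *.
    assert (Hzv : z <> v) by auto.
    refine (conj _ (conj _ _)).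
    + intros y Hy. simpl in Hy |- *. destruct (classic (y = v)) as [->|n]; [congruence|].
      rewrite H6 in * by auto. destruct (Ia y Hy) as [A1 A2]. split; auto.
      destruct (classic (c_link c y = v)) as [E|n2].
      * rewrite E, H5. auto.
      * rewrite H6; auto.
    + intros m [<-|Hm].
      * simpl. repeat split; auto.
        -- rewrite H6 by auto. auto.
        -- rewrite H5. auto.
        -- exists v, t. repeat split; auto; try lra.
           rewrite (tdist_refl adj w HT). lra.
           apply (towards_self adj w HT); auto.
      * specialize (Ib m Hm). destruct m as [[[k' x'] u'] s']. simpl in Ib |- *.
        destruct Ib as [B1 [B2 [B3 B4]]]. repeat split; auto.
        -- destruct (classic (u' = v)) as [->|n]; [rewrite H5; apply adj_neq in B1; auto|].
           rewrite H6; auto.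
        -- destruct (classic (x' = v)) as [->|n]; [rewrite H5; apply adj_neq in B1; auto|].
           rewrite H6; auto.
    + constructor; auto. rewrite Forall_forall. intros m Hm.
      specialize (Ib m Hm). destruct m as [[[k' x'] u'] s']. simpl in Ib |- *.
      destruct Ib as [B1 [B2 [B3 B4]]]. intros [[<- <-]|[<- <-]]; auto.
  -
    assert (Hin : In (k, x, u, s) (c_flight c)) by (rewrite H1; apply in_or_app; right; left; auto).
    destruct (Ib _ Hin) as [B1 [B2 [B3 B4]]].
    rewrite H1 in Ic.
    refine (conj _ (conj _ _)).
    + intros y Hy. simpl in Hy |- *. destruct (classic (y = u)) as [->|n].
      * rewrite H5. split; [apply (wt_sym _ _ HT); auto|].
        rewrite H6 by (apply adj_neq; auto). auto.
      * rewrite H6 in * by auto. destruct (Ia y Hy) as [A1 A2]. split; auto.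
        destruct (classic (c_link c y = u)) as [E|n2].
        -- rewrite E, H5. intros ->. congruence.
        -- rewrite H6; auto.
    + intros m Hm. apply (msg_ok_same l'); auto.
      apply (msg_ok_deliver c l' x u); auto.
      * apply Ib. rewrite H1. apply in_app_or in Hm. apply in_or_app. destruct Hm; [left|right;right]; auto.
      * pose proof (FOP_remove_rel diff_edge diff_edge_sym _ _ _ Ic m Hm).
        destruct m as [[[k' x'] u'] s']. simpl in *. auto.
    + eapply FOP_remove; eauto.
  -
    assert (Hin : In (k, x, u, s) (c_flight c)) by (rewrite H1; apply in_or_app; right; left; auto).
    destruct (Ib _ Hin) as [B1 [B2 [B3 B4]]].
    destruct (Ia u H3) as [Adj Back].
    set (z := c_link c u) in *.
    rewrite H1 in Ic.
    assert (Hold : forall m, In m (l1 ++ l2) -> msg_ok (mkConf l' nil (fun _ => False) 0) m).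
    { intros m Hm. apply (msg_ok_deliver c l' x u); auto.
      * apply Ib. rewrite H1. apply in_app_or in Hm. apply in_or_app. destruct Hm; [left|right;right]; auto.
      * pose proof (FOP_remove_rel diff_edge diff_edge_sym _ _ _ Ic m Hm).
        destruct m as [[[k' x'] u'] s']. simpl in *. auto. }
    refine (conj _ (conj _ _)).
    + intros y Hy. simpl in Hy |- *. destruct (classic (y = u)) as [->|n].
      * rewrite H4. split; [apply (wt_sym _ _ HT); auto|].
        rewrite H5 by (apply adj_neq; auto). auto.
      * rewrite H5 in * by auto. destruct (Ia y Hy) as [A1 A2]. split; auto.
        destruct (classic (c_link c y = u)) as [E|n2].
        -- rewrite E, H4. intros ->. congruence.
        -- rewrite H5; auto.
    + intros m Hm. apply in_app_or in Hm. destruct Hm as [Hm|[<-|Hm]].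
      * apply (msg_ok_same l'); auto. apply Hold. apply in_or_app; auto.
      * simpl. assert (Hzu : z <> u) by auto.
        repeat split; auto.
        -- rewrite H5 by auto. auto.
        -- rewrite H4. auto.
        -- destruct B4 as [vk [tk [C1 [C2 [C3 C4]]]]]. exists vk, tk. repeat split; auto.
           ++ lra.
           ++ rewrite (towards_dist adj w HT vk x u C4). lra.
           ++ apply (towards_step adj w HT vk x u z); auto.
      * apply (msg_ok_same l'); auto. apply Hold. apply in_or_app; auto.
    + apply FOP_insert; [apply diff_edge_sym| eapply FOP_remove; eauto|].
      intros m Hm. assert (Hm' : In m (c_flight c)).
      { rewrite H1. apply in_app_or in Hm. apply in_or_app. destruct Hm; [left|right;right]; auto. }
      specialize (Ib m Hm'). destruct m as [[[k' x'] u'] s']. simpl in Ib |- *.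
      destruct Ib as [C1 [C2 [C3 C4]]]. intros [[<- <-]|[<- <-]]; auto.
Qed.

Lemma INV_init c0 : initial_config adj v0 c0 -> INV c0.
Proof.
  intros [[Hl0 Hl] [Hf [_ _]]]. refine (conj _ (conj _ _)); [| rewrite Hf; intros m [] | rewrite Hf; constructor].
  intros u Hu.
  assert (Hu0 : u <> v0) by (intros ->; congruence).
  destruct (Hl u Hu0) as [p Hp].
  set (z := c_link c0 u) in *.
  split.
  - destruct Hp as [_ [_ [Hc _]]]. simpl in Hc. tauto.
  - intros Hzu. destruct (classic (z = v0)) as [Ez|Nz].
    + rewrite Ez in Hzu. congruence.
    + destruct (Hl z Nz) as [p' Hp']. rewrite Hzu in Hp'.
      assert (S1 : spath adj u v0 (u :: p')) by (apply (spath_suffix adj z v0 [z]); auto).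
      pose proof (spath_unique adj w HT _ _ _ _ S1 Hp) as E. injection E as E.
      destruct Hp' as [_ [_ [_ Hn]]]. rewrite E in Hn.
      apply NoDup_cons_iff in Hn. apply (proj1 Hn). right; left; auto.
Qed.

Definition early (k : nat) : Prop := ~ (tj <= rt v0 reqs k).

Definition Jc (c : @config V) (g : R * nat * V) : Prop :=
  match g with (tz, z, u) =>
    (z < length reqs)%nat /\
    ((u = rv v0 reqs z /\ tz = rt v0 reqs z) \/
     (towards adj (rv v0 reqs z) (c_link c u) u /\
      tz <= rt v0 reqs z + tdist adj w (rv v0 reqs z) u)) end.

Definition Jinv (l : list (R * nat * V)) (c : @config V) : Prop :=
  forall l1 g l2, l = l1 ++ g :: l2 -> (forall e, In e l1 -> snd e <> snd g) ->
    early (snd (fst g)) -> Jc c g.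

Definition KEY (l : list (R * nat * V)) : Prop :=
  forall l1 t k u l2, l = l1 ++ (t, k, u) :: l2 -> tj <= rt v0 reqs k ->
    forall s k', In (s, k', u) l2 -> early k' -> s <= t - dl.

Lemma trace_sorted R0 c0 l c th : trace w R0 c0 l c th ->
  forall l1 g l2, l = l1 ++ g :: l2 -> forall e, In e l2 -> fst (fst e) <= fst (fst g).
Proof.
  induction 1 as [|l c th t c' k u Htr IH Hth S]; intros l1 g l2 E e He.
  - destruct l1; discriminate.
  - destruct l1 as [|e' l1].
    + simpl in E. injection E as <- <-. simpl. pose proof (trace_time _ _ _ _ _ _ Htr e He). lra.
    + simpl in E. injection E as _ E. eapply IH; eauto.
Qed.

Lemma last_occ (u : V) (l : list (R * nat * V)) :
  (forall e, In e l -> snd e <> u) \/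
  exists l1 g l2, l = l1 ++ g :: l2 /\ snd g = u /\ forall e, In e l1 -> snd e <> u.
Proof.
  induction l as [|e l IH].
  - left; intros e [].
  - destruct (classic (snd e = u)) as [Eu|Nu].
    + right. exists [], e, l. split; [reflexivity|split; [exact Eu|intros e' []]].
    + destruct IH as [IH|[l1 [g [l2 [E [Hg Hl1]]]]]].
      * left. intros e' [<-|He']; auto.
      * right. exists (e :: l1), g, l2. rewrite E. repeat split; auto.
        intros e' [<-|He']; auto.
Qed.

Lemma lstep_facts c t c' k u : lstep w reqs c t c' k u ->
  nth_error reqs k = Some (u, t) \/ exists p s, In (k, p, u, s) (c_flight c) /\ s <= t.
Proof.
  intros H; destruct H; [left|left|right|right]; auto.
  - exists x, s. rewrite H. split; [apply in_or_app; right; left; auto | lra].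
  - exists x, s. rewrite H. split; [apply in_or_app; right; left; auto | lra].
Qed.

Lemma lstep_time c t c' k u : INV c -> lstep w reqs c t c' k u ->
  (k < length reqs)%nat /\ rt v0 reqs k <= t.
Proof.
  intros [_ [Ib _]] H. destruct (lstep_facts _ _ _ _ _ H) as [E|[p [s [Hin Hs]]]].
  - destruct (nth_error_info _ _ _ E) as [_ [E2 E3]]. split; auto. lra.
  - destruct (Ib _ Hin) as [_ [_ [_ [vk [tk [E [E1 _]]]]]]].
    destruct (nth_error_info _ _ _ E) as [_ [E2 E3]]. split; auto. lra.
Qed.

Lemma KEYf c0 l c th t c' y u : trace w reqs c0 l c th -> INV c -> Jinv l c -> KEY l ->
  th <= t -> lstep w reqs c t c' y u -> tj <= rt v0 reqs y ->
  forall s k', In (s, k', u) l -> early k' -> s <= t - dl.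
Proof.
  intros Htr Hinv HJ HK Hth Hst Hy s k' Hin Hk'.
  destruct (last_occ u l) as [Hno | [l1 [g [l2 [El [Hg Hl1]]]]]].
  - exfalso. apply (Hno _ Hin). reflexivity.
  - destruct g as [[tg kg] ug]. simpl in Hg. subst ug.
    assert (Hgt : tg <= th).
    { apply (trace_time _ _ _ _ _ _ Htr (tg, kg, u)). rewrite El. apply in_or_app. right; left; auto. }
    assert (Hs : (s, k', u) = (tg, kg, u) \/ In (s, k', u) l2).
    { rewrite El in Hin. apply in_app_or in Hin. destruct Hin as [Hin|[E|Hin]]; auto.
      exfalso. apply (Hl1 _ Hin). reflexivity. }
    assert (Hsg : s <= tg).
    { destruct Hs as [E|Hs]; [injection E; intros; subst; lra|].
      apply (trace_sorted _ _ _ _ _ Htr l1 (tg, kg, u) l2 El _ Hs). }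
    destruct (classic (tj <= rt v0 reqs kg)) as [Lg|Eg].
    + destruct Hs as [E|Hs].
      * injection E; intros; subst. contradiction.
      * pose proof (HK l1 tg kg u l2 El Lg s k' Hs Hk'). lra.
    + pose proof (HJ l1 (tg, kg, u) l2 El Hl1 Eg) as Hjc. simpl in Hjc.
      destruct Hjc as [Hkg Hj2].
      assert (Hdl : tg <= t - dl).
      { destruct Hinv as [_ [Ib _]].
        destruct (lstep_facts _ _ _ _ _ Hst) as [E|[p [s' [Hin' Hs']]]].
        - destruct (nth_error_info _ _ _ E) as [Ev [Et Ey]].
          pose proof (gap_bound kg y Hkg Ey (Rnot_le_lt _ _ Eg) Hy) as G.
          rewrite Ev, Et in G.
          pose proof (tdist_nonneg adj w HT (rv v0 reqs kg) u).
          destruct Hj2 as [[E1 E2]|[_ E2]].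
          + lra.
          + lra.
        - destruct (Ib _ Hin') as [_ [Hne [_ [vy [ty [E [E1 [_ Etw]]]]]]]].
          destruct (nth_error_info _ _ _ E) as [Ev [Et Ey]].
          pose proof (gap_bound kg y Hkg Ey (Rnot_le_lt _ _ Eg) Hy) as G.
          rewrite Ev, Et in G.
          pose proof (tdist_nonneg adj w HT (rv v0 reqs kg) vy).
          destruct Hj2 as [[E3 E2]|[Htw E2]].
          + lra.
          + pose proof (towards_le adj w HT _ _ _ _ _ Htw Etw Hne). lra. }
      lra.
Qed.

Lemma Jc_new c t c' k u : INV c -> lstep w reqs c t c' k u -> Jc c' (t, k, u).
Proof.
  intros [_ [Ib _]] H. destruct H; simpl.
  - destruct (nth_error_info _ _ _ H0) as [Ev [Et Ek]]. auto.
  - destruct (nth_error_info _ _ _ H0) as [Ev [Et Ek]]. auto.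
  - assert (Hin : In (k, x, u, s) (c_flight c)) by (rewrite H; apply in_or_app; right; left; auto).
    destruct (Ib _ Hin) as [_ [_ [_ [vk' [tk' [E [E1 [E2 Etw]]]]]]]].
    destruct (nth_error_info _ _ _ E) as [Ev [Et Ek]].
    split; auto. right. rewrite Ev, Et, H3. split; auto.
    rewrite (towards_dist adj w HT _ _ _ Etw). lra.
  - assert (Hin : In (k, x, u, s) (c_flight c)) by (rewrite H; apply in_or_app; right; left; auto).
    destruct (Ib _ Hin) as [_ [_ [_ [vk' [tk' [E [E1 [E2 Etw]]]]]]]].
    destruct (nth_error_info _ _ _ E) as [Ev [Et Ek]].
    split; auto. right. rewrite Ev, Et, H2. split; auto.
    rewrite (towards_dist adj w HT _ _ _ Etw). lra.
Qed.

Lemma Jinv_step l c t c' k u : INV c -> Jinv l c -> lstep w reqs c t c' k u ->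
  Jinv ((t, k, u) :: l) c'.
Proof.
  intros Hinv HJ Hst l1 g l2 E Hl1 Eg. destruct l1 as [|e l1].
  - simpl in E. injection E as <- <-. eapply Jc_new; eauto.
  - simpl in E. injection E as <- E.
    assert (Hu : u <> snd g) by (apply (Hl1 (t, k, u)); left; auto).
    pose proof (HJ l1 g l2 E (fun e' He' => Hl1 e' (or_intror He')) Eg) as Hjc.
    destruct g as [[tz z] ug]. simpl in *.
    rewrite (lstep_link_other _ _ _ _ _ Hst ug) by auto. auto.
Qed.

Lemma KEY_step l t k u : KEY l ->
  (tj <= rt v0 reqs k -> forall s k', In (s, k', u) l -> early k' -> s <= t - dl) ->
  KEY ((t, k, u) :: l).
Proof.
  intros HK Hn l1 t0 k0 u0 l2 E Hk0. destruct l1 as [|e l1].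
  - simpl in E. inversion E; subst. apply Hn; auto.
  - simpl in E. inversion E; subst. apply (HK l1 t0 k0 u0 l2 eq_refl Hk0).
Qed.

Lemma sim c0 : initial_config adj v0 c0 -> forall l c th, trace w reqs c0 l c th ->
  INV c /\ Jinv l c /\ KEY l /\
  exists lR cR thR, trace w reqs' c0 lR cR thR /\ ceq cR (phic c) /\ thR <= th /\
    (forall e, In e lR -> exists e0, In e0 l /\ e = trf e0).
Proof.
  intros Hinit. induction 1 as [|l c th t c' k u Htr IH Hth S].
  - split; [apply INV_init; auto|]. split; [intros l1 g l2 E; destruct l1; discriminate|].
    split; [intros l1 t k u l2 E; destruct l1; discriminate|].
    exists [], c0, 0. split; [constructor|]. split; [|split; [lra| intros e []]].
    destruct Hinit as [_ [Hf _]]. unfold phic. repeat split; simpl; auto.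
    rewrite Hf. simpl. constructor.
  - destruct IH as [Hinv [HJ [HK [lR [cR [thR [TR [Hc [HthR Hmem]]]]]]]]].
    split; [eapply INV_step; eauto|].
    split; [eapply Jinv_step; eauto|].
    split.
    { apply KEY_step; auto. intros Hl. eapply KEYf; eauto. }
    destruct (lstep_shift _ _ _ _ _ S) as [c'' [S' Hc'']].
    destruct (lstep_ceq _ _ _ _ _ _ _ _ S' (ceq_sym _ _ Hc)) as [d' [S'' Hd']].
    assert (Hd'c : ceq d' (phic c')) by (eapply ceq_trans; [apply ceq_sym; eauto | auto]).
    destruct (Rle_dec tj (rt v0 reqs k)) as [L|E] eqn:Ek.
    +
      destruct (lstep_time _ _ _ _ _ Hinv S) as [Hk Hkt].
      pose proof (dl_le k Hk L).
      assert (Hdlpos : 0 < dl) by exact Hpos.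
      destruct (insertion _ _ _ _ _ _ _ _ _ _ TR S'') as [lR' [c2 [th' [TR' [Hc2 [Hth' Hmem']]]]]].
      { lra. }
      { intros s k' u' Hin Hlt. destruct (Hmem _ Hin) as [[[s0 k0] u0] [Hin0 Ee]].
        simpl in Ee. pose proof (trace_time _ _ _ _ _ _ Htr _ Hin0) as Hs0. simpl in Hs0.
        destruct (Rle_dec tj (rt v0 reqs k0)) as [L0|E0]; injection Ee as -> -> ->.
        - lra.
        - split.
          + intros ->. pose proof (KEYf _ _ _ _ _ _ _ _ Htr Hinv HJ HK Hth S L s0 k0 Hin0 E0). lra.
          + intros ->. contradiction. }
      exists lR', c2, th'. split; auto. split.
      { eapply ceq_trans; [apply ceq_sym; eauto | auto]. }
      split.
      { unfold Rmax in Hth'. destruct (Rle_dec thR (t - dl)); lra. }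
      intros e He. destruct (Hmem' e He) as [->|He'].
      * exists (t, k, u). split; [left; auto|]. simpl. rewrite Ek. auto.
      * destruct (Hmem e He') as [e0 [Hin0 Ee]]. exists e0. split; auto. right; auto.
    +
      exists ((t, k, u) :: lR), d', t. split; [econstructor; eauto; lra|].
      split; auto. split; [lra|].
      intros e [<-|He].
      * exists (t, k, u). split; [left; auto|]. simpl. rewrite Ek. auto.
      * destruct (Hmem e He) as [e0 [Hin0 Ee]]. exists e0. split; auto. right; auto.
Qed.

Lemma arrow_part : Rbar_le (arrow_wc adj w v0 reqs) (arrow_wc adj w v0 reqs').
Proof.
  unfold arrow_wc.
  destruct (Lub_Rbar_correct (arrow_costs adj w v0 reqs)) as [_ Hl].
  destruct (Lub_Rbar_correct (arrow_costs adj w v0 reqs')) as [Hub _].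
  apply Hl. intros x [c0 [cf [Hinit [Hsteps [[Hff Hfi] ->]]]]].
  apply Hub.
  destruct (steps_trace _ _ _ _ _ _ Hsteps [] (tr_nil _ _ _)) as [l [th Htr]].
  destruct (sim c0 Hinit l cf th Htr) as [_ [_ [_ [lR [cR [thR [TR [Hc _]]]]]]]].
  exists c0, cR. split; auto. split.
  { eapply trace_steps; eauto. constructor. }
  destruct Hc as [C1 [C2 [C3 C4]]]. simpl in *.
  split; [split|].
  - rewrite Hff in C2. simpl in C2. apply Permutation_nil. apply Permutation_sym; auto.
  - intros k Hk. apply C3. apply Hfi. rewrite len' in Hk. auto.
  - auto.
Qed.


End Main.

Theorem lemma15 (V : Type) (adj : V -> V -> Prop) (w : V -> V -> R)
    (reqs : list (V * R)) (v0 : V) (i j a b : nat) :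
  wtree adj w ->
  valid_requests v0 reqs ->
  (i < length reqs)%nat -> (j < length reqs)%nat -> i <> j ->
  rt v0 reqs i <= rt v0 reqs j ->
  (forall k, (k < length reqs)%nat ->
     ~ (rt v0 reqs i < rt v0 reqs k < rt v0 reqs j)) ->
  (a < length reqs)%nat -> (b < length reqs)%nat ->
  rt v0 reqs a <= rt v0 reqs i -> rt v0 reqs j <= rt v0 reqs b ->
  (forall a' b', (a' < length reqs)%nat -> (b' < length reqs)%nat ->
     rt v0 reqs a' <= rt v0 reqs i -> rt v0 reqs j <= rt v0 reqs b' ->
     gap adj w v0 reqs a b <= gap adj w v0 reqs a' b') ->
  0 < gap adj w v0 reqs a b ->
  let reqs' := shift_reqs (rt v0 reqs j) (gap adj w v0 reqs a b) reqs in
  Rbar_le (arrow_wc adj w v0 reqs) (arrow_wc adj w v0 reqs') /\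
  Rbar_le (OPT adj w v0 reqs') (OPT adj w v0 reqs).
Proof.
  intros HT HV Hi Hj Hij Htij Hcons Ha Hb Hta Htb Hmin Hpos reqs'.
  split.
  - eapply (arrow_part adj w reqs v0 i j a b); eauto.
  - eapply (opt_part adj w reqs v0 i j a b); eauto.
Qed.
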